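(* Let $(J,S)$ be a homogeneous $d$-dimensional multi-time Markov renewal chain with semi-Markov kernel $q$, let $u=\sum_{n\ge0}q^{(n)}=(\mathbbm{I}_s-q)^{(-1)}$, and let $Z$ be the associated multi-time semi-Markov chain with transition function $P$. Then $P=u*\widetilde{H}$.
   Context: $E=\{1,\dots,s\}$; $\mathcal{M}_s(\mathbb{N}^d)$ is the set of functions $\mathbb{N}^d\to\mathbb{R}^{s\times s}$, with convolution $[A*B](k)=\sum_{l+l'=k}A(l)B(l')$, identity $\mathbbm{I}_s$, powers $A^{(n)}$ and convolutional inverse $A^{(-1)}$. $\mathbb{N}^d$ carries the partial order $k\le l$ iff $k_u\le l_u$ for all $u$ ($k<l$: $k\le l$, $k\neq l$). A homogeneous $d$-dimensional multi-time Markov renewal chain is a process $(J_n,S_n)_{n\in\mathbb{N}}$, $J_n\in E$, $S_n\in\mathbb{N}^d$, $S_0=0_d$, $S_n<S_{n+1}$, with a.s. $\mathbb{P}(J_{n+1}=j,S_{n+1}-S_n=k\mid J_{0:n},S_{0:n})=q_{J_nj}(k)$, $q_{ij}(k)=\mathbb{P}(J_{n+1}=j,S_{n+1}-S_n=k\mid J_n=i)$ independent of $n$. $X_{n+1}=S_{n+1}-S_n$. $N(k)=\sup\{n\in\mathbb{N}:S_n\le k\}$; the associated multi-time semi-Markov chain is $Z_k=J_{N(k)}$, $k\in\mathbb{N}^d$, and its transition function is $P_{ij}(k)=\mathbb{P}(Z_k=j\mid Z_{0_d}=i)$. With $H_i(k)=\mathbb{P}(X_{n+1}\le k\mid J_n=i)$,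 $\widetilde{H}\in\mathcal{M}_s(\mathbb{N}^d)$ is the diagonal matrix sequence $\widetilde{H}(k)=\mathrm{diag}(1-H_1(k),\dots,1-H_s(k))$. *)

(* Defs.v *)
From HB Require Import structures.
From mathcomp Require Import all_boot all_order all_algebra.
From mathcomp Require Import all_classical all_reals all_analysis.
Set Implicit Arguments. Unset Strict Implicit. Unset Printing Implicit Defensive.
Import Order.TTheory GRing.Theory Num.Theory.
Local Open Scope ring_scope.
Local Open Scope classical_set_scope.

Definition mi (d : nat) := {ffun 'I_d -> nat}.

Definition mi0 (d : nat) : mi d := [ffun => 0%N].
Definition mi_sub d (k l : mi d) : mi d := [ffun i => (k i - l i)%N].
Definition mle d (k l : mi d) : bool := [forall i, (k i <= l i)%N].
Definition mlt d (k l : mi d) : bool := mle k l && (k != l).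
Definition mnorm d (k : mi d) : nat := (\sum_(i < d) k i)%N.

(* the finite list of all l in N^d with l <= k *)
Definition box d (k : mi d) : seq (mi d) :=
  [seq l <- map (fun g : {ffun 'I_d -> 'I_(\max_(i < d) k i).+1} =>
                   ([ffun i => nat_of_ord (g i)] : mi d))
               (enum {ffun 'I_d -> 'I_(\max_(i < d) k i).+1}) | mle l k].

Definition mseq (R : realType) (s d : nat) := mi d -> 'M[R]_s.

Definition mconv (R : realType) s d (A B : mseq R s d) : mseq R s d :=
  fun k => \sum_(l <- box k) (A l *m B (mi_sub k l)).

Definition mid (R : realType) s d : mseq R s d :=
  fun k => if k == mi0 d then 1%:M else 0.

Fixpoint mpow (R : realType) s d (A : mseq R s d) (n : nat) : mseq R s d :=
  match n with
  | 0 => @mid R s d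
  | n'.+1 => mconv (mpow A n') A
  end.

(* u = sum_{n>=0} q^(n); for a semi-Markov kernel (q(0_d) = 0) one has
   q^(n)(k) = 0 whenever n > |k|, so the series at k is the finite sum below. *)
Definition markov_renewal_fn (R : realType) s d (q : mseq R s d) : mseq R s d :=
  fun k => \sum_(n < (mnorm k).+1) mpow q n k.

(* H_i(k) = P(X_{n+1} <= k | J_n = i) = sum_j sum_{l <= k} q_ij(l) *)
Definition Hsoj (R : realType) s d (q : mseq R s d) (i : 'I_s) (k : mi d) : R :=
  \sum_(j < s) \sum_(l <- box k) q l i j.

Definition Htilde (R : realType) s d (q : mseq R s d) : mseq R s d :=
  fun k => \matrix_(i, j) (if i == j then 1 - Hsoj q i k else 0).

Definition hist (T : Type) s d (J : nat -> T -> 'I_s) (S : nat -> T -> mi d)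
  (n : nat) (js : nat -> 'I_s) (ss : nat -> mi d) : set T :=
  [set w | forall m, (m <= n)%N -> J m w = js m /\ S m w = ss m].

(* Event {Z_k = j}, where Z_k = J_{N(k)}, N(k) = sup {n | S_n <= k} *)
Definition Zev (T : Type) s d (J : nat -> T -> 'I_s) (S : nat -> T -> mi d)
  (k : mi d) (j : 'I_s) : set T :=
  [set w | exists n, mle (S n w) k /\ (forall m, mle (S m w) k -> (m <= n)%N)
                     /\ J n w = j].

Definition condP (R : realType) (dT : measure_display) (T : measurableType dT)
  (P : probability T R) (A B : set T) : R :=
  fine (P (A `&` B)) / fine (P B).

Definition is_MRC (R : realType) (dT : measure_display) (T : measurableType dT)
  (P : probability T R) s d (J : nat -> T -> 'I_s) (S : nat -> T -> mi d)
  (q : mseq R s d) : Prop :=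
  [/\ (forall n j, measurable [set w | J n w = j]),
      (forall n k, measurable [set w | S n w = k]),
      (forall w, S 0%N w = mi0 d),
      (forall n w, mlt (S n w) (S n.+1 w)) &
      (forall n js ss (j : 'I_s) (k : mi d),
         P (hist J S n js ss `&` [set w | J n.+1 w = j /\ mi_sub (S n.+1 w) (S n w) = k])
         = (P (hist J S n js ss) * (q k (js n) j)%:E)%E)].

Definition semi_markov_kernel (R : realType) s d (q : mseq R s d) : Prop :=
  (forall k i j, 0 <= q k i j) /\ q (mi0 d) = 0.

(* Main.v *)
Require Import Defs.
From HB Require Import structures.
From mathcomp Require Import all_boot all_order all_algebra.
From mathcomp Require Import all_classical all_reals all_analysis.
Import Order.TTheory GRing.Theory Num.Theory.
Local Open Scope ring_scope.
Local Open Scope classical_set_scope.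
From mathcomp Require Import zify.
Set Implicit Arguments. Unset Strict Implicit.

Lemma mleP d (k l : mi d) : reflect (forall i, (k i <= l i)%N) (mle k l).
Proof. exact: forallP. Qed.

Lemma mle_refl d (k : mi d) : mle k k.
Proof. by apply/mleP. Qed.

Lemma mle_trans d (k l m : mi d) : mle k l -> mle l m -> mle k m.
Proof. move=> /mleP H1 /mleP H2; apply/mleP=> i; exact: leq_trans (H1 i) (H2 i). Qed.

Lemma mnorm_le d (k l : mi d) : mle k l -> (mnorm k <= mnorm l)%N.
Proof. move=> /mleP H; rewrite /mnorm; apply: leq_sum => i _; exact: H. Qed.

Lemma mnorm_lt d (k l : mi d) : mlt k l -> (mnorm k < mnorm l)%N.
Proof.
move=> /andP[/mleP H neq].
have [i Hi] : exists i, k i != l i.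
  apply/existsP; apply: contraR neq; rewrite negb_exists => /forallP H'.
  by apply/eqP/ffunP => x; apply/eqP; move: (H' x); rewrite negbK.
rewrite /mnorm (bigD1 i) //= [X in (_ < X)%N](bigD1 i) //=.
rewrite -addSn; apply: leq_add; first by rewrite ltn_neqAle Hi H.
by apply: leq_sum => x _; exact: H.
Qed.

Lemma mnorm0 d : mnorm (mi0 d) = 0%N.
Proof. by rewrite /mnorm big1 // => i _; rewrite ffunE. Qed.

Lemma mem_box d (k l : mi d) : (l \in box k) = mle l k.
Proof.
rewrite /box mem_filter; case H: (mle l k) => //=.
apply/mapP.
have Hb : forall i, (l i < (\max_(i0 < d) k i0).+1)%N.
  move=> i; rewrite ltnS; apply: leq_trans (leq_bigmax_cond _ _).
    by move/mleP: H; apply.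
  by [].
exists [ffun i => Ordinal (Hb i)]; first by rewrite mem_enum.
by apply/ffunP => i; rewrite !ffunE.
Qed.

Lemma box_uniq d (k : mi d) : uniq (box k).
Proof.
rewrite /box filter_uniq // map_inj_uniq ?enum_uniq //.
move=> f g /ffunP H; apply/ffunP => i; apply: val_inj.
by move: (H i); rewrite !ffunE.
Qed.

Section Meas.
Variables (R : realType) (dT : measure_display) (T : measurableType dT)
  (P : probability T R).

Definition pr (A : set T) : R := fine (P A).

Lemma prE A : measurable A -> P A = (pr A)%:E.
Proof. by move=> mA; rewrite /pr fineK // fin_num_measure. Qed.

Lemma pr0 : pr set0 = 0.
Proof. by rewrite /pr measure0. Qed.

Lemma prU A B : measurable A -> measurable B -> A `&` B = set0 ->
  pr (A `|` B) = pr A + pr B.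
Proof.
move=> mA mB AB; apply: EFin_inj; rewrite EFinD -!prE //; last exact: measurableU.
exact: measureU.
Qed.

Lemma bigU_mem (I : eqType) (xs : seq I) (F : I -> set T) w :
  (\big[setU/set0]_(x <- xs) F x) w <-> exists x, x \in xs /\ F x w.
Proof.
elim: xs => [|x xs IH]; first by rewrite big_nil; split => // -[x []].
rewrite big_cons; split.
  case=> [H|/IH [y [Hy Fy]]]; first by exists x; rewrite inE eqxx.
  by exists y; rewrite inE Hy orbT.
move=> [y []]; rewrite inE => /orP[/eqP ->|Hy] Fy; first by left.
by right; apply/IH; exists y.
Qed.

Lemma pr_bigU (I : eqType) (xs : seq I) (F : I -> set T) :
  uniq xs -> (forall x, measurable (F x)) ->
  (forall x y, x \in xs -> y \in xs -> x != y -> F x `&` F y = set0) ->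
  pr (\big[setU/set0]_(x <- xs) F x) = \sum_(x <- xs) pr (F x).
Proof.
elim: xs => [|x xs IH]; first by rewrite !big_nil pr0.
rewrite cons_uniq => /andP[nx uxs] mF dF.
rewrite !big_cons prU //; last first.
- rewrite big_distrr /= big1_seq // => y /andP[_ Hy].
  apply: dF; rewrite ?inE ?Hy ?orbT ?eqxx //.
  by apply: contraNneq nx => ->.
- by apply: bigsetU_measurable => y _.
congr (_ + _); apply: IH => // a b Ha Hb; apply: dF; rewrite inE ?Ha ?Hb orbT //.
Qed.

Lemma prD A U : measurable A -> measurable U -> U `<=` A ->
  pr (A `\` U) = pr A - pr U.
Proof.
move=> mA mU UA.
have -> : pr A = pr (U `|` (A `\` U)) by rewrite setDUK.
rewrite prU //; first by rewrite addrC addKr.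
  exact: measurableD.
by rewrite setIC setDKI.
Qed.

Lemma bigUI (I : Type) (xs : seq I) (F : I -> set T) (B : set T) :
  (\big[setU/set0]_(x <- xs) F x) `&` B = \big[setU/set0]_(x <- xs) (F x `&` B).
Proof.
elim: xs => [|x xs IH]; first by rewrite !big_nil set0I.
by rewrite !big_cons setIUl IH.
Qed.

Lemma pr_bigU2 (I1 I2 : eqType) (xs : seq I1) (ys : I1 -> seq I2)
  (F : I1 -> I2 -> set T) :
  uniq xs -> (forall x, uniq (ys x)) -> (forall x y, measurable (F x y)) ->
  (forall x y x' y' w, x \in xs -> y \in ys x -> x' \in xs -> y' \in ys x' ->
     F x y w -> F x' y' w -> x = x' /\ y = y') ->
  pr (\big[setU/set0]_(x <- xs) \big[setU/set0]_(y <- ys x) F x y)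
  = \sum_(x <- xs) \sum_(y <- ys x) pr (F x y).
Proof.
move=> uxs uys mF dF.
rewrite pr_bigU //; last first.
- move=> x x' Hx Hx' nxx'; apply/seteqP; split => // w [].
  move=> /bigU_mem [y [Hy Fy]] /bigU_mem [y' [Hy' Fy']].
  by have [exx' _] := dF _ _ _ _ _ Hx Hy Hx' Hy' Fy Fy'; rewrite exx' eqxx in nxx'.
- by move=> x; apply: bigsetU_measurable => y _.
apply: eq_big_seq => x Hx; rewrite pr_bigU //.
move=> y y' Hy Hy' nyy'; apply/seteqP; split => // w [Fy Fy'].
by have [_ eyy'] := dF _ _ _ _ _ Hx Hy Hx Hy' Fy Fy'; rewrite eyy' eqxx in nyy'.
Qed.

End Meas.

Section MRC.
Variables (R : realType) (dT : measure_display) (T : measurableType dT)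
  (P : probability T R) (s d : nat) (J : nat -> T -> 'I_s) (S : nat -> T -> mi d)
  (q : mseq R s d).
Hypothesis HM : is_MRC P J S q.

Lemma mJ n j : measurable [set w | J n w = j].
Proof. by case: HM. Qed.
Lemma mS n k : measurable [set w | S n w = k].
Proof. by case: HM. Qed.
Lemma S0 w : S 0 w = mi0 d.
Proof. by case: HM. Qed.
Lemma Slt n w : mlt (S n w) (S n.+1 w).
Proof. by case: HM. Qed.
Lemma Sle1 n w : mle (S n w) (S n.+1 w).
Proof. by case/andP: (Slt n w). Qed.

Lemma Sle m n w : (m <= n)%N -> mle (S m w) (S n w).
Proof.
elim: n => [|n IH]; first by rewrite leqn0 => /eqP ->; exact: mle_refl.
rewrite leq_eqVlt => /orP[/eqP ->|H]; first exact: mle_refl.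
exact: mle_trans (IH H) (Sle1 n w).
Qed.

Lemma Snorm n w : (n <= mnorm (S n w))%N.
Proof.
elim: n => [|n IH] //.
by apply: (leq_ltn_trans IH); apply: mnorm_lt; apply: Slt.
Qed.

Definition Next n j m := [set w | J n.+1 w = j /\ mi_sub (S n.+1 w) (S n w) = m].

Lemma mconstP (A : Prop) : measurable [set _ : T | A].
Proof.
case: (pselect A) => HA.
  by have -> : [set _ : T | A] = setT by apply/seteqP; split.
by have -> : [set _ : T | A] = set0 by apply/seteqP; split.
Qed.

Lemma mNext n j m : measurable (Next n j m).
Proof.
have -> : Next n j m = [set w | J n.+1 w = j] `&`
   \bigcup_(p : mi d * mi d) ([set w | S n w = p.1] `&` [set w | S n.+1 w = p.2]
       `&` [set _ | mi_sub p.2 p.1 = m]).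
  apply/seteqP; split => w /=.
    by move=> [Hj Hm]; split => //; exists (S n w, S n.+1 w).
  move=> [Hj [[a b] _ [[Ha Hb] Hm]]]; rewrite /= in Ha Hb Hm.
  by split => //; rewrite Ha Hb.
apply: measurableI; first exact: mJ.
apply: countable_bigcupT_measurable; first exact: countableP.
move=> p; apply: measurableI; last exact: mconstP.
apply: measurableI; exact: mS.
Qed.

Definition Hset i a n (js : nat -> 'I_s) (ss : nat -> mi d) :=
  [set w | J 0 w = i /\ forall m, (a <= m <= n)%N -> J m w = js m /\ S m w = ss m].

Lemma mforall (Q : nat -> set T) n : (forall m, measurable (Q m)) ->
  measurable [set w | forall m, (m <= n)%N -> Q m w].
Proof.
move=> mQ; elim: n => [|n IH].
  have -> : [set w | forall m, (m <= 0)%N -> Q m w] = Q 0%N; last exact: mQ.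
  apply/seteqP; split => w /=; first by apply.
  by move=> H m; rewrite leqn0 => /eqP ->.
have -> : [set w | forall m, (m <= n.+1)%N -> Q m w] =
   [set w | forall m, (m <= n)%N -> Q m w] `&` Q n.+1.
  apply/seteqP; split => w /=.
    by move=> H; split => [m Hm|]; apply: H => //; exact: leqW.
  move=> [H1 H2] m; rewrite leq_eqVlt => /orP[/eqP ->|]; first by [].
  by rewrite ltnS; apply: H1.
exact: measurableI.
Qed.

Lemma mHset i a n js ss : measurable (Hset i a n js ss).
Proof.
have -> : Hset i a n js ss = [set w | J 0 w = i] `&`
  [set w | forall m, (m <= n)%N -> (if (a <= m)%N then [set w | J m w = js m] `&`
      [set w | S m w = ss m] else setT) w].
  apply/seteqP; split => w /= [H0 H]; split => // m.
    by move=> Hm; case: ifP => // Ha; apply: H; rewrite Ha.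
  by move=> /andP[Ha Hm]; move: (H m Hm); rewrite Ha.
apply: measurableI; first exact: mJ.
apply: mforall => m; case: ifP => _ //.
apply: measurableI; [exact: mJ | exact: mS].
Qed.

Lemma hist_Hset n js ss : hist J S n js ss = Hset (js 0%N) 0 n js ss.
Proof.
apply/seteqP; split => w /=.
  by move=> H; split; [case: (H 0%N) | move=> m /andP[_ Hm]; apply: H].
by move=> [H0 H] m Hm; apply: H.
Qed.

Lemma kerpr n js ss j k : pr P (hist J S n js ss `&` Next n j k)
  = pr P (hist J S n js ss) * q k (js n) j.
Proof.
have mh : measurable (hist J S n js ss) by rewrite hist_Hset; exact: mHset.
case: HM => _ _ _ _ H; apply: EFin_inj.
rewrite -prE; last by apply: measurableI => //; exact: mNext.
by rewrite EFinM -prE // H.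
Qed.

Lemma markov_H a : forall n i js ss j' m, (a <= n)%N ->
  pr P (Hset i a n js ss `&` Next n j' m) = pr P (Hset i a n js ss) * q m (js n) j'.
Proof.
elim: a => [|a IH] n i js ss j' m Han.
  case: (eqVneq (js 0%N) i) => [<-|ne]; first by rewrite -hist_Hset kerpr.
  have -> : Hset i 0 n js ss = set0.
    apply/seteqP; split => // w [H0 H].
    case: (H 0%N); first by rewrite leq0n.
    by move=> H1 _; rewrite -H1 H0 eqxx in ne.
  by rewrite set0I pr0 mul0r.
pose jsu j := fun m => if m == a then j else js m.
pose ssu l := fun m => if m == a then l else ss m.
have dec0 : Hset i a.+1 n js ss = \big[setU/set0]_(j <- index_enum 'I_s)
    \big[setU/set0]_(l <- box (ss a.+1)) Hset i a n (jsu j) (ssu l).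
  apply/seteqP; split => w.
    move=> [H0 H]; apply/bigU_mem; exists (J a w); split; first by rewrite mem_index_enum.
    apply/bigU_mem; exists (S a w); split.
      rewrite mem_box -(H a.+1 _).2; first exact: Sle1.
      by rewrite leqnn Han.
    split => // m' /andP[Ham Hmn]; rewrite /jsu /ssu; case: eqP => [->|/eqP nma] //.
    by apply: H; rewrite Hmn andbT ltn_neqAle eq_sym nma Ham.
  move=> /bigU_mem [j [_ /bigU_mem [l [_ [H0 H]]]]]; split => // m' /andP[Ham Hmn].
  by have := H m'; rewrite /jsu /ssu (gtn_eqF Ham); apply; rewrite Hmn (ltnW Ham).
have dec : forall B, Hset i a.+1 n js ss `&` B = \big[setU/set0]_(j <- index_enum 'I_s)
    \big[setU/set0]_(l <- box (ss a.+1)) (Hset i a n (jsu j) (ssu l) `&` B).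
  by move=> B; rewrite dec0 bigUI; apply: eq_bigr => j _; rewrite bigUI.
have dF : forall B x y x' y' w, (Hset i a n (jsu x) (ssu y) `&` B) w ->
    (Hset i a n (jsu x') (ssu y') `&` B) w -> x = x' /\ y = y'.
  move=> B x y x' y' w [[_ H1] _] [[_ H2] _].
  have Ha : (a <= a <= n)%N by rewrite leqnn ltnW.
  case: (H1 a Ha) (H2 a Ha); rewrite /jsu /ssu eqxx => -> -> [].
  by [].
rewrite -[X in _ = pr P X * _]setIT !dec !pr_bigU2 //.
all: try by move=> x y x' y' w _ _ _ _; apply: dF.
all: try exact: box_uniq.
all: try exact: index_enum_uniq.
all: try by move=> x y; apply: measurableI; [apply: mHset | apply: mNext].
all: try by move=> x y; apply: measurableI; [apply: mHset | ].
rewrite big_distrl; apply: eq_bigr => j _; rewrite big_distrl; apply: eq_bigr => l _.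
rewrite setIT IH; last exact: ltnW.
by rewrite /jsu (gtn_eqF Han).
all: by move=> _; exact: box_uniq.
Qed.

End MRC.

Lemma mi_sub_inj d (l x y : mi d) : mle l x -> mle l y -> mi_sub x l = mi_sub y l -> x = y.
Proof.
move=> /mleP Hx /mleP Hy /ffunP H; apply/ffunP => t.
move: (H t) (Hx t) (Hy t); rewrite /mi_sub !ffunE => E1 E2 E3.
by rewrite -(subnK E2) -(subnK E3) E1.
Qed.

Lemma mle_sub d (l x k : mi d) : mle l k ->
  mle (mi_sub x l) (mi_sub k l) = mle x k.
Proof.
move=> /mleP Hk; rewrite /mle; apply: eq_forallb => t.
by rewrite /mi_sub !ffunE leq_sub2rE.
Qed.

Lemma sum_ext (R : realType) (f : nat -> R) a b : (a <= b)%N ->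
  (forall n, (a < n)%N -> f n = 0) ->
  \sum_(n < a.+1) f n = \sum_(0 <= n < b.+1) f n.
Proof.
move=> Hab Hf; rewrite -(big_mkord xpredT) [RHS](@big_cat_nat _ _ _ a.+1) //=.
rewrite [X in _ + X]big1_seq ?addr0 // => n /andP[_].
by rewrite mem_index_iota => /andP[H _]; exact: Hf.
Qed.

Section Main.
Variables (R : realType) (dT : measure_display) (T : measurableType dT)
  (P : probability T R) (s d : nat) (J : nat -> T -> 'I_s) (S : nat -> T -> mi d)
  (q : mseq R s d).
Hypothesis HM : is_MRC P J S q.

Definition E i n j l := Hset J S i n n (fun _ => j) (fun _ => l).

Lemma mE i n j l : measurable (E i n j l).
Proof. exact: (mHset HM). Qed.

Lemma markovE i n j l j' m :
  pr P (E i n j l `&` Next J S n j' m) = pr P (E i n j l) * q m j j'.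
Proof. exact: (markov_H HM _ _ _ _ _ (leqnn n)). Qed.

Lemma E_rec i n j' l' : pr P (E i n.+1 j' l') =
  \sum_(j <- index_enum 'I_s) \sum_(l <- box l') pr P (E i n j l) * q (mi_sub l' l) j j'.
Proof.
have -> : E i n.+1 j' l' = \big[setU/set0]_(j <- index_enum 'I_s)
   \big[setU/set0]_(l <- box l') (E i n j l `&` Next J S n j' (mi_sub l' l)).
  apply/seteqP; split => w.
    move=> [H0 H]; have [HJ HS] : J n.+1 w = j' /\ S n.+1 w = l' by apply: H; rewrite ltnSn /=.
    apply/bigU_mem; exists (J n w); split; first by rewrite mem_index_enum.
    apply/bigU_mem; exists (S n w); split.
      rewrite mem_box -HS; exact: (Sle1 HM).
    split; last by split => //; rewrite HS.
    split => // m /andP[H1 H2].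
    by have -> : m = n by apply/eqP; rewrite eqn_leq H1 H2.
  move=> /bigU_mem [j [_ /bigU_mem [l [Hl [[H0 H] [HJ HS]]]]]].
  split => // m /andP[H1 H2].
  have -> : m = n.+1 by apply/eqP; rewrite eqn_leq H1 H2.
  split => //.
  have [_ HSn] : J n w = j /\ S n w = l by apply: H; rewrite leqnn /=.
  rewrite HSn in HS; apply: (mi_sub_inj _ _ HS); last by rewrite -mem_box.
  rewrite -HSn; exact: (Sle1 HM).
rewrite pr_bigU2.
- by apply: eq_bigr => j _; apply: eq_bigr => l _; rewrite markovE.
- exact: index_enum_uniq.
- by move=> _; exact: box_uniq.
- by move=> x y; apply: measurableI; [apply: mE | apply: (mNext HM)].
move=> x y x' y' w _ _ _ _ [[_ H1] _] [[_ H2] _].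
have Ha : (n <= n <= n)%N by rewrite leqnn.
by case: (H1 n Ha) (H2 n Ha) => -> -> [].
Qed.

Lemma E_closed i n j l :
  pr P (E i n j l) = pr P [set w | J 0 w = i] * mpow q n l i j.
Proof.
elim: n j l => [|n IH] j l.
  rewrite /= /mid; case: (eqVneq l (mi0 d)) => [->|nl].
    rewrite mxE; case: (eqVneq i j) => [<-|nij].
      rewrite mulr1; congr (pr P _); apply/seteqP; split => w /=.
        by case.
      move=> H0; split => // m; rewrite leqn0 andTb => /eqP ->.
      by rewrite H0 (S0 HM).
    have -> : E i 0 j (mi0 d) = set0.
      apply/seteqP; split => // w [H0 H].
      have [HJ _] : J 0 w = j /\ S 0 w = mi0 d by apply: H.
      by rewrite -H0 HJ eqxx in nij.
    by rewrite pr0 mulr0.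
  have -> : E i 0 j l = set0.
    apply/seteqP; split => // w [H0 H].
    have [_ HS] : J 0 w = j /\ S 0 w = l by apply: H.
    by rewrite -HS (S0 HM) eqxx in nl.
  by rewrite pr0 mxE mulr0.
rewrite E_rec /= /mconv summxE mulr_sumr exchange_big /=.
apply: eq_bigr => l0 _; rewrite mxE mulr_sumr; apply: eq_bigr => j0 _.
by rewrite IH mulrA.
Qed.

Lemma E_zero i n j l : (mnorm l < n)%N -> E i n j l = set0.
Proof.
move=> Hl; apply/seteqP; split => // w [H0 H].
have [_ HS] : J n w = j /\ S n w = l by apply: H; rewrite leqnn /=.
have := leq_trans Hl (Snorm HM n w); rewrite HS ltnn //.
Qed.

Lemma mpow_zero i n j l : pr P [set w | J 0 w = i] != 0 -> (mnorm l < n)%N ->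
  mpow q n l i j = 0.
Proof.
move=> Hp Hl; have := E_closed i n j l; rewrite E_zero // pr0 => /esym /eqP.
by rewrite mulf_eq0 (negbTE Hp) /= => /eqP.
Qed.

Lemma Zev0 i : Zev J S (mi0 d) i = [set w | J 0 w = i].
Proof.
apply/seteqP; split => w /=.
  move=> [n [Hn [_ HJ]]].
  have := leq_trans (Snorm HM n w) (mnorm_le Hn).
  by rewrite mnorm0 leqn0 => /eqP e; rewrite -e.
move=> H0; exists 0%N; split; first by rewrite (S0 HM) mle_refl.
split => // m Hm.
by have := leq_trans (Snorm HM m w) (mnorm_le Hm); rewrite mnorm0.
Qed.

Definition U i n j l k := \big[setU/set0]_(j' <- index_enum 'I_s)
  \big[setU/set0]_(m <- box (mi_sub k l)) (E i n j l `&` Next J S n j' m).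

Lemma mU i n j l k : measurable (U i n j l k).
Proof.
apply: bigsetU_measurable => j' _; apply: bigsetU_measurable => m _.
apply: measurableI; [exact: mE | exact: (mNext HM)].
Qed.

Lemma U_iff i n j l k w : mle l k -> E i n j l w ->
  (U i n j l k w <-> mle (S n.+1 w) k).
Proof.
move=> Hlk [H0 H].
have [_ HS] : J n w = j /\ S n w = l by apply: H; rewrite leqnn /=.
have Hl1 : mle l (S n.+1 w) by rewrite -HS; exact: (Sle1 HM).
split.
  move=> /bigU_mem [j' [_ /bigU_mem [m [Hm [_ [_ Hm']]]]]].
  by move: Hm; rewrite mem_box -Hm' HS mle_sub.
move=> Hk; apply/bigU_mem; exists (J n.+1 w); split; first by rewrite mem_index_enum.
apply/bigU_mem; exists (mi_sub (S n.+1 w) (S n w)); split.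
  by rewrite mem_box HS mle_sub.
by split.
Qed.

Lemma prU_val i n j l k : mle l k ->
  pr P (U i n j l k) = pr P (E i n j l) * Hsoj q j (mi_sub k l).
Proof.
move=> Hlk; rewrite /U pr_bigU2.
- rewrite /Hsoj mulr_sumr; apply: eq_bigr => j' _; rewrite mulr_sumr.
  by apply: eq_bigr => m _; rewrite markovE.
- exact: index_enum_uniq.
- by move=> _; exact: box_uniq.
- by move=> x y; apply: measurableI; [apply: mE | apply: (mNext HM)].
by move=> x y x' y' w _ _ _ _ [_ [H1 H2]] [_ [H1' H2']]; split; rewrite -?H1 -?H2.
Qed.

Lemma Zev_dec k i j : Zev J S k j `&` [set w | J 0 w = i] =
  \big[setU/set0]_(n <- index_iota 0 (mnorm k).+1)
  \big[setU/set0]_(l <- box k) (E i n j l `\` U i n j l k).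
Proof.
apply/seteqP; split => w.
  move=> [[n [Hn [Hmax HJ]]] H0].
  have Ew : E i n j (S n w) w.
    by split => // m /andP[a b]; have -> : m = n by apply/eqP; rewrite eqn_leq a b.
  apply/bigU_mem; exists n; split.
    by rewrite mem_index_iota leq0n ltnS; exact: leq_trans (Snorm HM n w) (mnorm_le Hn).
  apply/bigU_mem; exists (S n w); split; first by rewrite mem_box.
  split => // /(U_iff Hn Ew) /Hmax; rewrite ltnn //.
move=> /bigU_mem [n [_ /bigU_mem [l [Hl [Ew nU]]]]].
have Ew' := Ew; case: Ew' => H0 H.
have [HJ HS] : J n w = j /\ S n w = l by apply: H; rewrite leqnn /=.
rewrite mem_box in Hl.
split => //; exists n; split; first by rewrite HS.
split => // m Hm; rewrite leqNgt; apply/negP => Hnm; apply: nU.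
by apply/(U_iff Hl Ew); exact: mle_trans (Sle HM w Hnm) Hm.
Qed.

Lemma piece_eq k i n j n' j' l l' w : mle l k -> mle l' k ->
  (E i n j l `\` U i n j l k) w -> (E i n' j' l' `\` U i n' j' l' k) w ->
  n = n' /\ l = l'.
Proof.
move=> Hl Hl' [Ew nU] [Ew' nU'].
have Ew1 := Ew; have Ew1' := Ew'.
case: Ew1 => _ H; case: Ew1' => _ H'.
have [_ HS] : J n w = j /\ S n w = l by apply: H; rewrite leqnn /=.
have [_ HS'] : J n' w = j' /\ S n' w = l' by apply: H'; rewrite leqnn /=.
case: (ltngtP n n') => Hnn'.
- by exfalso; apply: nU; apply/(U_iff Hl Ew); rewrite (mle_trans (Sle HM w Hnn')) // HS'.
- by exfalso; apply: nU'; apply/(U_iff Hl' Ew'); rewrite (mle_trans (Sle HM w Hnn')) // HS.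
by split => //; rewrite -HS -HS' Hnn'.
Qed.

End Main.

Unset Implicit Arguments. Set Strict Implicit.

Theorem proposition8 (R : realType) (dT : measure_display) (T : measurableType dT)
  (P : probability T R) (s d : nat) (J : nat -> T -> 'I_s) (S : nat -> T -> mi d)
  (q : mseq R s d) :
  semi_markov_kernel q ->
  is_MRC P J S q ->
  forall (i j : 'I_s) (k : mi d),
    P (Zev J S (mi0 d) i) != 0%E ->
    condP P (Zev J S k j) (Zev J S (mi0 d) i)
    = mconv (markov_renewal_fn q) (Htilde q) k i j.
Proof.
move=> _ HM i j k Hp.
have Hp' : pr P [set w | J 0 w = i] != 0.
  by move: Hp; rewrite (Zev0 HM) (prE P (mJ HM 0 i)) eqe.
rewrite /condP (Zev0 HM).
change (pr P (Zev J S k j `&` [set w | J 0 w = i]) / pr P [set w | J 0 w = i] = 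
  mconv (markov_renewal_fn q) (Htilde q) k i j).
have piece : forall n l, l \in box k -> pr P (E J S i n j l `\` U J S i n j l k) =
    pr P [set w | J 0 w = i] * mpow q n l i j * (1 - Hsoj q j (mi_sub k l)).
  move=> n l; rewrite mem_box => Hl.
  rewrite prD; first last.
  - by move=> w /bigU_mem [j' [_ /bigU_mem [m [_ [Ew _]]]]].
  - exact: (mU HM).
  - exact: (mE HM).
  by rewrite (prU_val HM _ _ _ Hl) (E_closed HM) mulrBr mulr1.
have entry : forall l, l \in box k ->
    (markov_renewal_fn q l *m Htilde q (mi_sub k l)) i j =
    (\sum_(0 <= n < (mnorm k).+1) mpow q n l i j) * (1 - Hsoj q j (mi_sub k l)).
  move=> l; rewrite mem_box => Hl.
  rewrite mxE (bigD1 j) //= big1 ?addr0; last first.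
    by move=> x /negbTE nx; rewrite /Htilde mxE nx mulr0.
  rewrite /Htilde mxE eqxx /markov_renewal_fn summxE (sum_ext (f := fun n => mpow q n l i j) (b := mnorm k)).
  - by [].
  - exact: mnorm_le.
  by move=> n Hn; rewrite (mpow_zero HM j Hp' Hn).
rewrite (Zev_dec HM) pr_bigU2; first last.
- move=> x y x' y' w _ Hy _ Hy' F F'.
  by apply: (piece_eq HM _ _ F F'); rewrite -mem_box.
- by move=> x y; apply: measurableD; [exact: (mE HM) | exact: (mU HM)].
- by move=> _; exact: box_uniq.
- exact: iota_uniq.
rewrite /mconv summxE (eq_big_seq _ entry).
under eq_bigr do rewrite mulr_suml.
rewrite exchange_big mulr_suml; apply: eq_big_seq => l Hl.
rewrite mulr_suml; apply: eq_bigr => n _.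
by rewrite (piece _ _ Hl) mulrC !mulrA mulVf // mul1r.
Qed.
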